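(* Let $G$ be a finite group, $S$ a generating set of $G$, and $X \subseteq S$. Assume: (i) $\langle X \rangle$ is abelian and nontrivial; (ii) for each $g \in G$, either $g$ centralizes every element of $\langle X \rangle$, or $g$ inverts every element of $\langle X \rangle$ (i.e., $g^{-1}yg = y^{-1}$ for all $y \in \langle X \rangle$); (iii) $\mathrm{Cay}(\langle X \rangle; X)$ has a hamiltonian cycle; and (iv) $\mathrm{Cay}(G/\langle X \rangle; S)$ has a hamiltonian path. Then $\mathrm{Cay}(G;S)$ has a hamiltonian cycle.
   Context: For a group $G$ and a subset $S \subseteq G$, the Cayley graph $\mathrm{Cay}(G;S)$ has vertex set $G$, with $g$ adjacent to $gs$ for every $g \in G$ and $s \in S \cup S^{-1}$. Hypothesis (ii) implies $\langle X \rangle$ is normal in $G$; $\mathrm{Cay}(G/\langle X \rangle;S)$ denotes the Cayley graph of the quotient group with respect to the image of $S$. A hamiltonian path visits every vertex exactly once. *)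

(* Defs.v *)
From mathcomp Require Import all_boot all_fingroup.
Set Implicit Arguments. Unset Strict Implicit. Unset Printing Implicit Defensive.
Local Open Scope group_scope.

Definition cay_adj (T : finGroupType) (S : {set T}) : rel T :=
  fun g h => [exists s in S, (h == g * s) || (h == g * s^-1)].

Definition ham_cycle (T : finType) (e : rel T) (V : {set T}) : Prop :=
  exists c : seq T, [/\ uniq c, c =i V & path.cycle e c].

Definition ham_path (T : finType) (e : rel T) (V : {set T}) : Prop :=
  exists (x : T) (p : seq T), [/\ uniq (x :: p), (x :: p) =i V & path e x p].

(* Main.v *)
Require Import Defs.
From mathcomp Require Import all_boot all_fingroup.
Set Implicit Arguments. Unset Strict Implicit. Unset Printing Implicit Defensive.
Definition Rb (T : Type) (r : seq T) (b : bool) := if b then rev r else r.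

Fixpoint snake (L T : Type) (v : L -> T -> T) (a : T) (r : seq T)
   (ls : seq L) (b : bool) : seq T :=
  if ls is l :: ls' then map (v l) (Rb r b) ++ snake v a r ls' (~~ b) ++ [:: v l a]
  else [::].

Lemma snake_size (L T : Type) (v : L -> T -> T) a r ls b :
  size (snake v a r ls b) = size ls * (size r).+1.
Proof.
elim: ls b => //= l ls IH b.
rewrite !size_cat size_map IH /Rb; case: b; rewrite ?size_rev /= mulSn;
  by rewrite addn1 addnS -addSn.
Qed.

Lemma snake_mem (L T : eqType) (v : L -> T -> T) a r ls b z :
  (z \in snake v a r ls b) = has (fun l => z \in map (v l) (a :: r)) ls.
Proof.
elim: ls b => //= l ls IH b.
rewrite !mem_cat IH inE /Rb; case: b; rewrite ?map_rev ?mem_rev /= inE;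
  by case: (z \in map _ r); case: (z == _); case: has; rewrite ?orbT.
Qed.

Lemma cycle_rev_sym (T : eqType) (eX : rel T) a r :
  symmetric eX -> path.cycle eX (a :: r) -> path.cycle eX (a :: rev r).
Proof.
move=> sym cyc.
have : path.cycle eX (rev (a :: r)).
  by rewrite rev_cycle (eq_cycle (e' := eX)) // => x y; rewrite sym.
by rewrite rev_cons -(rotr_cycle 1) rotr1_rcons.
Qed.

Lemma Rb_last (T : eqType) (a : T) (r : seq T) b : r != [::] ->
  last a (Rb r b) = head a (Rb r (~~ b)).
Proof.
case: r => // r0 r1 _; case: b; rewrite /Rb //= rev_cons; first by rewrite last_rcons.
by elim/last_ind: r1 => //= s z _; rewrite rev_rcons last_rcons.
Qed.

Lemma block_path (L T : eqType) (e eX : rel T) (v : L -> T -> T) a r l b y :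
  symmetric eX -> path.cycle eX (a :: r) -> r != [::] ->
  (forall h h', h \in a :: r -> h' \in a :: r -> eX h h' -> e (v l h) (v l h')) ->
  e y (v l (head a (Rb r b))) ->
  path e y (map (v l) (Rb r b)) && e (last y (map (v l) (Rb r b))) (v l a).
Proof.
move=> eXsym cyc rne hl.
have cycb : forall b, path.cycle eX (a :: Rb r b).
  by case; rewrite /Rb //; apply: cycle_rev_sym.
have memb : forall b h, h \in Rb r b -> h \in a :: r.
  by case=> h; rewrite /Rb ?mem_rev inE => ->; rewrite orbT.
have := cycb b; have := memb b.
have : Rb r b != [::] by case: b rne; rewrite /Rb // -!size_eq0 size_rev.
case: (Rb r b) => // h0 s _ mem /= cyc0 ey; rewrite ey /=.
move: cyc0; rewrite rcons_path => /andP[eah /andP[ph els]].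
apply/andP; split.
  rewrite path_map; apply: (@sub_in_path _ [pred u | u \in a :: r] eX (relpre (v l) e) _ h0 s _ ph).
    by move=> u w ui wi /=; apply: hl.
  by apply/allP => u ui; apply: mem.
rewrite last_map; apply: hl => //; first by apply: mem; rewrite mem_last.
by rewrite inE eqxx.
Qed.

Lemma snake_path (L T : eqType) (e eX : rel T) (v : L -> T -> T) a r ls l b y :
  symmetric e -> symmetric eX -> path.cycle eX (a :: r) -> r != [::] ->
  (forall l0, l0 \in l :: ls -> forall h h', h \in a :: r -> h' \in a :: r ->
       eX h h' -> e (v l0 h) (v l0 h')) ->
  path (fun l l' => all (fun h => e (v l h) (v l' h)) (a :: r)) l ls ->
  e y (v l (head a (Rb r b))) ->
  path e y (snake v a r (l :: ls) b) && (last y (snake v a r (l :: ls) b) == v l a).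
Proof.
move=> esym eXsym cyc rne.
have ldb : forall b, last a (Rb r b) = head a (Rb r (~~ b)) by move=> b0; apply: Rb_last.
elim: ls l b y => [|l' ls IH] l b y hl lp ey.
  rewrite /= cats1 rcons_path.
  have /andP[-> ->] := @block_path L T e eX v a r l b y eXsym cyc rne (hl l (mem_head _ _)) ey.
  by rewrite last_rcons eqxx.
have /andP[p1 e1] := @block_path L T e eX v a r l b y eXsym cyc rne (hl l (mem_head _ _)) ey.
case/andP: lp => lll' lp.
have lall : forall h, h \in a :: r -> e (v l h) (v l' h).
  move=> h; rewrite inE => /orP[/eqP->|hr]; first by case/andP: lll'.
  by case/andP: lll' => _ /allP; apply.
have ey' : e (last y (map (v l) (Rb r b))) (v l' (head a (Rb r (~~ b)))).
  have nb : Rb r b != [::] by case: (b) rne; rewrite /Rb // -!size_eq0 size_rev.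
  rewrite -ldb; case E: (Rb r b) nb => [//|h0 s] _ /=; rewrite last_map.
  apply: lall; rewrite inE; apply/orP; right.
  have : last h0 s \in Rb r b by rewrite E mem_last.
  by case: (b); rewrite /Rb ?mem_rev.
have hl' : forall l0, l0 \in l' :: ls -> forall h h', h \in a :: r -> h' \in a :: r ->
       eX h h' -> e (v l0 h) (v l0 h').
  by move=> l0 l0i; apply: hl; rewrite inE l0i orbT.
have /andP[p2 /eqP e2] := IH l' (~~ b) _ hl' lp ey'.
have -> : snake v a r [:: l, l' & ls] b =
   map (v l) (Rb r b) ++ snake v a r (l' :: ls) (~~ b) ++ [:: v l a] by [].
rewrite cat_path p1 cat_path p2 last_cat e2 last_cat e2 /= eqxx !andbT.
by rewrite esym; apply: lall; rewrite mem_head.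
Qed.

Local Open Scope group_scope.

Lemma cay_adj_sym (T : finGroupType) (S : {set T}) : symmetric (cay_adj S).
Proof.
have one : forall x y, cay_adj S x y -> cay_adj S y x.
  move=> x y /existsP[s /andP[sS /orP[/eqP->|/eqP->]]]; apply/existsP; exists s;
  by rewrite sS /= ?mulgK ?invgK ?mulgKV eqxx ?orbT.
by move=> x y; apply/idP/idP; apply: one.
Qed.

Definition psi (T : finGroupType) (b : bool) (h : T) := if b then h^-1 else h.
Definition vv (T : finGroupType) (l : T * bool) (h : T) := l.1 * psi l.2 h.

Lemma layer_adj (T : finGroupType) (S X : {set T}) (H : {group T}) (g : T) (b : bool) h h' :
  X \subset S -> X \subset H -> {in H &, forall x y, commute x y} ->
  h \in H -> cay_adj X h h' -> cay_adj S (vv (g, b) h) (vv (g, b) h').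
Proof.
move=> sXS sXH cH hH /existsP[x /andP[xX hx]]; apply/existsP; exists x.
rewrite (subsetP sXS) //= /vv /psi /=.
have xH := subsetP sXH x xX.
have cxh : commute x^-1 h^-1 by apply: cH; rewrite groupV.
have cxh' : commute x h^-1 by apply: cH; rewrite ?groupV.
case: b; case/orP: hx => /eqP->; rewrite ?mulgA ?eqxx ?orbT //.
  by rewrite invMg cxh mulgA eqxx orbT.
by rewrite invMg invgK cxh' mulgA eqxx.
Qed.

Definition binv (T : finGroupType) (H : {set T}) (t : T) := [forall y in H, y ^ t == y^-1].

Lemma conj_psi (T : finGroupType) (G H : {group T}) t b h :
  (forall g, g \in G -> (forall y, y \in H -> commute g y) \/
                        (forall y, y \in H -> y ^ g = y^-1)) ->
  t \in G -> h \in H -> (psi b h) ^ t = psi (b (+) binv H t) h.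
Proof.
move=> cj Gt hH.
have key : forall y, y \in H -> y ^ t = if binv H t then y^-1 else y.
  move=> y yH; case E: (binv H t).
    by move/forallP: E => /(_ y); rewrite yH => /eqP.
  case: (cj t Gt) => [ct|it]; first by rewrite conjgE -(ct y yH) mulKg.
  move: E; rewrite /binv => /negbT/forallPn[z]; rewrite negb_imply => /andP[zH].
  by rewrite (it z zH) eqxx.
have pH : psi b h \in H by case: b; rewrite /psi ?groupV.
rewrite key //; case: (binv H t); move: pH; case: b; rewrite /psi /= ?invgK //.
Qed.

Lemma step_adj (T : finGroupType) (S : {set T}) (G H : {group T}) s t g b h :
  (forall g, g \in G -> (forall y, y \in H -> commute g y) \/
                        (forall y, y \in H -> y ^ g = y^-1)) ->
  s \in S -> (t == s) || (t == s^-1) -> t \in G -> h \in H ->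
  cay_adj S (vv (g, b) h) (vv (g * t, b (+) binv H t) h).
Proof.
move=> cj sS ts Gt hH; rewrite /vv /= -(conj_psi b cj Gt hH) conjgE.
rewrite -mulgA mulKVg mulgA.
apply/existsP; exists s; rewrite sS /=.
by case/orP: ts => /eqP->; rewrite eqxx ?orbT.
Qed.

Lemma lift (T : finGroupType) (S : {set T}) (G H : {group T}) :
  (forall g, g \in G -> (forall y, y \in H -> commute g y) \/
                        (forall y, y \in H -> y ^ g = y^-1)) ->
  S \subset G -> G \subset 'N(H) ->
  forall p q g b, g \in G -> coset H g = q ->
  path (cay_adj (coset H @: S)) q p ->
  exists Ls : seq (T * bool),
    [/\ map (fun l => coset H l.1) Ls = p, all (fun l => l.1 \in G) Ls &
     path (fun l l' => [forall h in H, cay_adj S (vv l h) (vv l' h)]) (g, b) Ls].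
Proof.
move=> cj sSG nHG; elim=> [|q' p IH] q g b Gg gq.
  by move=> _; exists [::].
case/andP=> /existsP[s' /andP[/imsetP[s sS ->] qq']] pp.
have Gs := subsetP sSG s sS.
have [t [Gt ts tq]] : exists t, [/\ t \in G, (t == s) || (t == s^-1) & q' = q * coset H t].
  case/orP: qq' => /eqP->; [exists s | exists s^-1]; rewrite ?groupV ?eqxx ?orbT //.
  by rewrite morphV // (subsetP nHG).
have Ggt : g * t \in G by rewrite groupM.
have cgt : coset H (g * t) = q' by rewrite tq -gq -morphM ?(subsetP nHG).
have [Ls [m1 m2 m3]] := IH q' (g * t) (b (+) binv H t) Ggt cgt pp.
exists ((g * t, b (+) binv H t) :: Ls); split; [by rewrite /= m1 cgt | by rewrite /= Ggt |].
rewrite /= m3 andbT; apply/forallP => h; apply/implyP => hH.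
exact: step_adj cj sS ts Gt hH.
Qed.
Theorem mainTheorem3 (gT : finGroupType) (G : {group gT}) (S X : {set gT})
  (sSG : S \subset G) (genS : <<S>> = G) (sXS : X \subset S)
  (abX : abelian <<X>>) (ntX : <<X>> != 1)
  (cjX : forall g, g \in G ->
     (forall y, y \in <<X>> -> commute g y) \/
     (forall y, y \in <<X>> -> y ^ g = y^-1))
  (hcX : ham_cycle (cay_adj X) <<X>>)
  (hpQ : ham_path (cay_adj (coset <<X>> @: S)) (G / <<X>>)) :
  ham_cycle (cay_adj S) G.
Proof.
move: genS => eSG.
have sXH : X \subset <<X>> := subset_gen X.
have sHG : <<X>> \subset G by rewrite -eSG; apply: genS.
have nHG : G \subset 'N(<<X>>).
  apply/subsetP => g Gg; rewrite inE; apply/subsetP => z /imsetP[y yH ->].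
  case: (cjX g Gg) => [c|i]; last by rewrite i // groupV.
  by rewrite conjgE -(c y yH) mulKg.
have cH : {in <<X>> &, forall x y, commute x y}.
  by move=> x y xH yH; apply: (centP (subsetP abX x xH)).
case: hcX => c [uc cHm cyc].
have n2 : 1 < #|<<X>>| by rewrite cardG_gt1.
have szc : size c = #|<<X>>| by rewrite -(card_uniqP uc); apply: eq_card.
case: c uc cHm cyc szc => [|a r] uc cHm cyc szc; first by rewrite -szc in n2.
have rne : r != [::] by move: n2; rewrite -szc; case: (r).
have ar : cay_adj X a (head a r).
  move: cyc rne; case E: r => [//|r0 r1] /= /andP[-> _] _ //.
case: hpQ => q0 [p [up pQ pp]].
have : q0 \in G / <<X>> by rewrite -pQ mem_head.
case/morphimP => g0 Ng0 Gg0 eq0.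
have [Ls [m1 m2 m3]] := @lift _ S G <<X>>%G cjX sSG nHG p q0 g0 false Gg0 (esym eq0) pp.
set L := (g0, false) :: Ls.
have hl : forall l0, l0 \in L -> forall h h', h \in a :: r -> h' \in a :: r ->
    cay_adj X h h' -> cay_adj S (vv l0 h) (vv l0 h').
  move=> [g b] _ h h' hi _; apply: layer_adj sXS sXH cH _.
  by rewrite -cHm.
have lp : path (fun l l' => all (fun h => cay_adj S (vv l h) (vv l' h)) (a :: r)) (g0, false) Ls.
  apply: sub_path m3 => l l' /forallP F; apply/allP => h hi.
  by have := F h; rewrite -cHm hi.
have ey : cay_adj S (vv (g0, false) a) (vv (g0, false) (head a (Rb r false))).
  by apply: hl (mem_head _ _) _ _ _ _ ar; rewrite ?mem_head // inE; case: (r) rne => //= r0 r1 _; rewrite inE eqxx orbT.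
have /andP[P1 /eqP P2] := @snake_path _ _ (cay_adj S) (cay_adj X) (@vv _) a r Ls (g0, false) false _
   (@cay_adj_sym _ S) (@cay_adj_sym _ X) cyc rne hl lp ey.
have LG : forall l, l \in L -> l.1 \in G.
  move=> l; rewrite inE => /orP[/eqP->//|lL]; exact: (allP m2).
have memG : snake (@vv _) a r L false =i G.
  move=> z; rewrite snake_mem; apply/hasP/idP.
    case=> l lL /mapP[h hi ->]; rewrite /vv groupM ?LG //.
    have hG : h \in G by rewrite (subsetP sHG) // -cHm.
    by case: (l.2); rewrite /psi ?groupV.
  move=> zG.
  have eL : q0 :: p = map (fun l => coset <<X>> l.1) L by rewrite /= m1 eq0.
  have : coset <<X>> z \in q0 :: p by rewrite pQ mem_quotient.
  rewrite eL => /mapP[l lL ez]; exists l => //.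
  have Nl := subsetP nHG _ (LG l lL); have Nz := subsetP nHG _ zG.
  have kH : l.1^-1 * z \in <<X>>.
    apply: coset_idr; first by rewrite groupM ?groupV.
    by rewrite morphM ?groupV // morphV //= ez mulVg.
  apply/mapP; exists (psi l.2 (l.1^-1 * z)).
    by rewrite cHm; case: (l.2); rewrite /psi ?groupV.
  by rewrite /vv; case: (l.2); rewrite /psi ?invgK mulKVg.
exists (snake (@vv _) a r L false); split => //.
  apply/card_uniqP; rewrite (eq_card memG) snake_size /= -[(size r).+1]/(size (a :: r)) szc.
  have szp : (size p).+1 = #|G / <<X>>|.
    by rewrite -(eq_card pQ) (card_uniqP up).
  rewrite -m1 size_map in szp.
  by rewrite szp card_quotient // mulnC Lagrange.
by rewrite (cycle_path (vv (g0, false) a)) P2.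
Qed.
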